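(* For all integers $n,k,d$ with $2\le k\le d<n$, there exists a directed graph $G$ on $\{D\}\cup[n]$ that satisfies the $d$-propagating-dealer property and satisfies $$\Gamma_{\text{sota}}(G)\ge\frac{n(n+1)}{4d}.$$
   Context: $G$ is a directed graph on $\{D\}\cup[n]$, $D$ the dealer, $[n]$ the participants; $\mathcal N(D)$ is the set of out-neighbours of $D$. $G$ satisfies the $d$-propagating-dealer property if there is an ordering of the $n$ participants such that every participant either has an incoming edge from $D$ or has incoming edges from at least $d$ participants preceding it in the ordering. For a participant $i$ and integer $w\ge k$, let $\ell_w(D\to i)$ be the minimum, over all families of $w$ internally vertex-disjoint directed paths from $D$ to $i$, of the average length (number of edges) of the paths in the family, with $\ell_w(D\to i)=\infty$ if no such family exists. The communication complexity of the state-of-the-art (separate secure transmissions) scheme is $$\Gamma_{\text{sota}}(G)=|\mathcal N(D)|+\sum_{i\notin\mathcal N(D)}\min_{w\ge k}\Big[\frac{w}{w-k+1}\,\ell_w(D\to i)\Big].$$ *)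

(* Defs.v *)
From HB Require Import structures.
From mathcomp Require Import all_boot all_order all_algebra.
Set Implicit Arguments. Unset Strict Implicit. Unset Printing Implicit Defensive.
Import Order.TTheory GRing.Theory Num.Theory.

(* Vertex set {D} ∪ [n] is encoded as 'I_n.+1 : vertex 0 is the dealer D,
   vertices 1..n are the participants.  A directed graph is a relation
   e : rel 'I_n.+1 (e u v = there is an edge u -> v). *)

Definition dealer {n : nat} : 'I_n.+1 := ord0.

Definition participants (n : nat) : seq 'I_n.+1 :=
  [seq i <- enum 'I_n.+1 | i != dealer].

Definition loopless (n : nat) (e : rel 'I_n.+1) : Prop :=
  forall x, ~~ e x x.

Definition propagating_dealer (n d : nat) (e : rel 'I_n.+1) : Prop :=
  exists ord : seq 'I_n.+1,
    perm_eq ord (participants n) /\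
    forall j, j < size ord ->
      e dealer (nth dealer ord j) ||
      (d <= count (fun u => e u (nth dealer ord j)) (take j ord)).

(* A directed simple path from D to i, described by its sequence p of internal
   vertices: D -> p_1 -> ... -> p_m -> i.  Its length (number of edges) is
   size p + 1. *)
Definition DPath (n : nat) (e : rel 'I_n.+1) (i : 'I_n.+1) (p : seq 'I_n.+1) : bool :=
  path e dealer (rcons p i) && uniq (dealer :: rcons p i).

Definition path_length (n : nat) (p : seq 'I_n.+1) : nat := (size p).+1.

Definition disjoint_family (n : nat) (e : rel 'I_n.+1) (i : 'I_n.+1)
    (F : seq (seq 'I_n.+1)) : bool :=
  all (DPath e i) F && uniq F &&
  pairwise (fun p q : seq 'I_n.+1 => ~~ has (fun x => x \in q) p) F.

Definition avg_length (n : nat) (F : seq (seq 'I_n.+1)) : rat :=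
  ((\sum_(p <- F) path_length p)%:R / (size F)%:R)%R.

Definition family_cost (n k : nat) (F : seq (seq 'I_n.+1)) : rat :=
  (((size F)%:R / ((size F)%:R - k%:R + 1)) * avg_length F)%R.

(* c is one of the values w/(w-k+1) * avg_length(F) over families F of
   w >= k internally vertex-disjoint D -> i paths.  The term
   min_{w>=k} [w/(w-k+1) * l_w(D->i)] of Gamma_sota is the minimum of this
   (finite) set of values, and is +infinity when the set is empty. *)
Definition achievable_cost (n k : nat) (e : rel 'I_n.+1) (i : 'I_n.+1) (c : rat) : Prop :=
  exists F : seq (seq 'I_n.+1),
    k <= size F /\ disjoint_family e i F /\ c = family_cost k F.

Definition dealer_nbrs (n : nat) (e : rel 'I_n.+1) : {set 'I_n.+1} :=
  [set i | (i != dealer) && e dealer i].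

(* Since every set of achievable costs is finite, its
   minimum (when it exists) is achieved; hence Gamma_sota(G) >= B iff every
   choice of an achievable cost c i for each participant i outside N(D)
   gives |N(D)| + sum_i c i >= B (vacuous if some term is +infinity). *)
Definition gamma_sota_ge (n k : nat) (e : rel 'I_n.+1) (B : rat) : Prop :=
  forall c : 'I_n.+1 -> rat,
    (forall i, i != dealer -> ~~ e dealer i -> achievable_cost k e i (c i)) ->
    (B <= #|dealer_nbrs e|%:R +
          \sum_(i | (i != dealer) && ~~ e dealer i) c i)%R.

(* Main.v *)
Require Import Defs.
From HB Require Import structures.
From mathcomp Require Import all_boot all_order all_algebra.
From mathcomp Require Import zify ring lra.
Import Order.TTheory GRing.Theory Num.Theory.

Definition erel {n : nat} (d : nat) : rel 'I_n.+1 :=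
  fun u v => (val u < val v) && (val v <= val u + d).

Lemma part_val n : map val (participants n) = iota 1 n.
Proof.
rewrite /participants enum_ordSl /=.
have -> : [seq i <- [seq lift ord0 i | i <- enum 'I_n] | i != dealer]
          = [seq lift ord0 i | i <- enum 'I_n].
  apply/all_filterP/allP => x /mapP [y _ ->]; by rewrite eq_sym neq_lift.
rewrite -map_comp (@eq_map _ _ _ (addn 1 \o val)); last by move=> y.
by rewrite map_comp val_enum_ord -iotaDl.
Qed.

Lemma path_bound n d (x : 'I_n.+1) p :
  path (erel d) x p -> val (last x p) <= val x + d * size p.
Proof.
elim: p x => [|y p IH] x /=; first by rewrite muln0 addn0.
move=> /andP [/andP [_ Hxy] Hp] ; have H2 := IH y Hp.
apply: (leq_trans H2); rewrite mulnS addnA leq_add2r; exact: Hxy.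
Qed.

Lemma sum_id n : (\sum_(i < n.+1) (i : nat)) * 2 = n * n.+1.
Proof.
elim: n => [|n IH]; first by rewrite big_ord_recr big_ord0.
rewrite big_ord_recr /= mulnDl IH; lia.
Qed.

Lemma sum_const_seq (T : Type) (F : seq T) (i : nat) :
  \sum_(p <- F) i = i * size F.
Proof.
elim: F => [|x F IH]; first by rewrite big_nil muln0.
rewrite big_cons IH /=; lia.
Qed.

Lemma cost_bound n k d (i : 'I_n.+1) c :
  1 <= k -> 0 < d -> achievable_cost k (erel d) i c ->
  ((val i)%:R <= d%:R * c :> rat)%R.
Proof.
move=> Hk Hd [F [HkF [HF ->]]].
move: HF => /andP [/andP [Hall _] _].
set S := \sum_(p <- F) path_length p.
have Hnat : val i * size F <= d * S.
  rewrite /S big_distrr /= -sum_const_seq.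
  rewrite big_seq [X in _ <= X]big_seq; apply: leq_sum => p Hp.
  move: (allP Hall p Hp) => /andP [Hpath _].
  have := @path_bound _ _ _ _ Hpath; rewrite last_rcons size_rcons /path_length /=.
  lia.
have Hw : (0 < size F)%N by lia.
rewrite /family_cost /avg_length -/S.
set W := (size F)%:R : rat.
have HW : (0 < W)%R by rewrite /W ltr0n.
have HK : ((k%:R : rat) <= W)%R by rewrite /W ler_nat.
have HK1 : ((1 : rat) <= k%:R)%R by rewrite ler1n.
have -> : (W / (W - k%:R + 1) * (S%:R / W) = S%:R / (W - k%:R + 1) :> rat)%R.
  field; rewrite -/W; apply/andP; split; apply: lt0r_neq0; lra.
rewrite mulrA ler_pdivlMr; last lra.
have Hr : (((val i)%:R : rat) * W <= d%:R * S%:R)%R.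
  by rewrite /W -!natrM ler_nat.
have Hi : ((0 : rat) <= (val i)%:R)%R by apply: ler0n.
nra.
Qed.

Theorem mainTheorem9 (n k d : nat) :
  2 <= k -> k <= d -> d < n ->
  exists e : rel 'I_n.+1,
    loopless e /\ propagating_dealer d e /\
    gamma_sota_ge k e (((n * n.+1)%:R / (4 * d)%:R)%R : rat).
Proof.
move=> Hk Hkd Hdn; exists (erel d); split; [|split].
- by move=> x; rewrite /erel ltnn.
- exists (participants n); split; first exact: perm_refl.
  move=> j; rewrite -(size_map val) part_val size_iota => Hj.
  have Hv : val (nth dealer (participants n) j) = j.+1.
    rewrite -(nth_map dealer 0); last by rewrite -(size_map val) part_val size_iota.
    by rewrite part_val nth_iota.
  rewrite /erel /= Hv.
  case: (leqP j.+1 d) => Hjd; first by rewrite ltn0Sn.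
  apply/orP; right.
  rewrite -(count_map val (fun m => (m < j.+1) && (j.+1 <= m + d))).
  rewrite map_take part_val take_iota (minn_idPl (ltnW Hj)).
  have -> : j = (j - d) + d by lia.
  rewrite iotaD count_cat.
  have Hall : all (fun m => (m < j - d + d + 1) && (j - d + d + 1 <= m + d))
                   (iota (1 + (j - d)) d).
    apply/allP => m; rewrite mem_iota => /andP [H1 H2]; apply/andP; lia.
  move: Hall; rewrite all_count => /eqP; rewrite size_iota.
  have E : (j - d + d).+1 = j - d + d + 1 by lia.
  rewrite E => ->; lia.
- move=> c Hc.
  have Hd : 0 < d by lia.
  have Hcard : (#|dealer_nbrs (@erel n d)|%:R =
      \sum_(i | (i != dealer :> 'I_n.+1) && erel d dealer i) 1 :> rat)%R.
    rewrite -sum1_card natr_sum; apply: eq_bigl => i; by rewrite inE.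
  rewrite Hcard.
  set T := (X in (_ <= X)%R).
  have Hsum : (((\sum_(i < n.+1) (i : nat))%:R : rat) <= d%:R * T)%R.
    rewrite natr_sum (bigD1 ord0) //= add0r.
    rewrite (bigID (fun i => erel d dealer i)) /= /T mulrDr !mulr_sumr.
    apply: lerD; apply: ler_sum => i /andP [Hi He].
      rewrite mulr1 ler_nat; move: He; rewrite /erel /=; lia.
    apply: (@cost_bound n k); [lia | exact: Hd | exact: Hc].
  have E := sum_id n.
  set X := ((\sum_(i < n.+1) (i : nat))%:R : rat) in Hsum.
  have HX : (0 <= X)%R by apply: ler0n.
  have HN : ((n * n.+1)%:R = 2 * X :> rat)%R.
    by rewrite -E natrM mulrC.
  have Hdr : ((0 : rat) < d%:R)%R by rewrite ltr0n.
  rewrite ler_pdivrMr; last by rewrite ltr0n muln_gt0 Hd.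
  rewrite HN natrM.
  nra.
Qed.
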